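(* Let $N\ge2$ and $0\le k\le N$. For complex $\xi_1,\dots,\xi_N$ with $|\xi_i|<1$ for all $i$, \[ \sum_{\sigma\in S_N}\operatorname{sgn}(\sigma)\prod_{j=1}^{k}\Big(\frac{1-\xi_j}{1-\xi_{\sigma(j)}}\Big)^{j-1}\prod_{j=k+1}^{N}\Big(\frac{1-\xi_j}{1-\xi_{\sigma(j)}}\Big)^{j-2}\cdot\frac{\prod_{j=2}^N\xi_{\sigma(j)}^{\,j-1}}{\prod_{m=k+1}^{N}\Big(1-\prod_{l=m}^N\xi_{\sigma(l)}\Big)} =\prod_{i=1}^k(1-\xi_i)\prod_{1\le i<j\le N}\frac{\xi_j-\xi_i}{1-\xi_i}\prod_{i=1}^N\frac{1}{1-\xi_i}, \] where empty products equal $1$. *)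

(* Defs.v *)
(* Complex numbers are modelled by an arbitrary
   numClosedFieldType C (of which the complex numbers are an instance). *)
From HB Require Import structures.
From mathcomp Require Import all_boot all_order all_algebra all_fingroup.
Set Implicit Arguments. Unset Strict Implicit. Unset Printing Implicit Defensive.

(* Main.v *)
Require Import Defs.
From HB Require Import structures.
From mathcomp Require Import all_boot all_order all_algebra all_fingroup.
From mathcomp Require Import ring.
Import Order.TTheory GRing.Theory Num.Theory.
Local Open Scope ring_scope.
Lemma per_i (F : fieldType) (a b x : F) (i k : nat) : a != 0 -> b != 0 ->
  (if (i < k)%N then (a / b) ^+ i else 1) * (if (k <= i)%N then (a / b) ^ (i%:Z - 1) else 1) * x ^+ i
  = (if (i < k)%N then a ^+ i else a ^ (i%:Z - 1)) * ((x / b) ^+ i * (if (k <= i)%N then b else 1)).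
Proof.
move=> a0 b0.
case: ltnP => ik.
  rewrite mulr1 !expr_div_n; ring.
case: i ik => [|i] ik.
  rewrite !expr0 !mulr1 mul1r /= (_ : (0%:Z - 1) = -1) //.
  by rewrite !exprN1 mul1r invf_div mulrC.
rewrite (_ : Posz i.+1 - 1 = Posz i); last by rewrite intS addrC addKr.
have ez : forall z : F, z ^ (Posz i) = z ^+ i by [].
rewrite mul1r !ez !expr_div_n !exprSr.
have bi : b ^+ i != 0 by rewrite expf_neq0.
move: (a ^+ i) (x ^+ i) (b ^+ i) bi => A X B B0.
by field; rewrite B0 b0.
Qed.

Lemma prod_lt_const (F : fieldType) N (j : 'I_N) (c : F) :
  \prod_(i < N | (i < j)%N) c = c ^+ j.
Proof.
transitivity (\prod_(0 <= i < j) c); last by rewrite prodr_const_nat subn0.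
rewrite (big_nat_widen 0 j N predT) ?(ltnW (ltn_ord j)) // big_mkord.
by apply: eq_bigl.
Qed.

Lemma fin_id (F : fieldType) N k (xi : 'I_N -> F) (ha : forall j, 1 - xi j != 0) :
  (\prod_(i < N) (if (i < k)%N then (1 - xi i) ^+ i else (1 - xi i) ^ (i%:Z - 1))) *
  \prod_(i < N) \prod_(j < N | (i < j)%N) (xi j / (1 - xi j) - xi i / (1 - xi i))
  = (\prod_(i < N | (i < k)%N) (1 - xi i))
    * (\prod_(i < N) \prod_(j < N | (i < j)%N) ((xi j - xi i) / (1 - xi i)))
    * (\prod_(i < N) (1 - xi i)^-1).
Proof.
have e1 : \prod_(i < N) \prod_(j < N | (i < j)%N) (xi j / (1 - xi j) - xi i / (1 - xi i))
  = (\prod_(i < N) \prod_(j < N | (i < j)%N) ((xi j - xi i) / (1 - xi i)))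
    * \prod_(i < N) \prod_(j < N | (i < j)%N) (1 - xi j)^-1.
  rewrite -big_split; apply: eq_bigr => i _; rewrite -big_split; apply: eq_bigr => j _ /=.
  by field; rewrite ha ha.
have e2 : \prod_(i < N) \prod_(j < N | (i < j)%N) (1 - xi j)^-1
   = \prod_(j < N) ((1 - xi j)^-1) ^+ j.
  rewrite (exchange_big_dep predT) //=; apply: eq_bigr => j _.
  exact: prod_lt_const.
rewrite e1 e2 mulrCA [RHS]mulrAC [RHS]mulrC; congr (_ * _).
rewrite -big_split [in RHS]big_mkcond -big_split /=; apply: eq_bigr => i _.
have ai := ha i; move: (1 - xi i) ai => a a0.
case: ltnP => ik.
  by rewrite -exprMn mulfV // expr1n.
case: (i : nat) => [|i'].
  by rewrite expr0 mulr1 mul1r exprN1.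
rewrite (_ : Posz i'.+1 - 1 = Posz i'); last by rewrite intS addrC addKr.
rewrite exprVn exprSr invfM mul1r mulrA.
have -> : a ^ (Posz i') = a ^+ i' by [].
by rewrite mulfV ?mul1r // expf_neq0.
Qed.
Section S.
Variable C : fieldType.
Variable n : nat.
Variable y : 'I_n.+1 -> C.

Definition Am (u : 'I_n.+1 -> C) : 'M[C]_n.+1 :=
  \matrix_(i, j) (if i == ord0 then u j else y j ^+ i * (1 + y j)).

Lemma detAm_add u v : \det (Am (fun j => u j + v j)) = \det (Am u) + \det (Am v).
Proof.
rewrite !(expand_det_row _ ord0) -big_split /=; apply: eq_bigr => r _.
have cof : forall w, cofactor (Am w) ord0 r = cofactor (Am u) ord0 r.
  move=> w; rewrite /cofactor; congr (_ * \det _); apply/matrixP => i j.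
  by rewrite !mxE.
by rewrite !mxE eqxx !cof mulrDl.
Qed.

Definition Vm := Vandermonde n.+1 (\row_j y j).

Lemma detAm_b : \det (Am (fun j => 1 + y j)) = \det Vm * \prod_j (1 + y j).
Proof.
have -> : Am (fun j => 1 + y j) = Vm *m diag_mx (\row_j (1 + y j)).
  apply/matrixP => i j; rewrite mul_mx_diag !mxE.
  by case: eqP => [->|//]; rewrite expr0 mul1r.
by rewrite det_mulmx det_diag; congr (_ * _); apply: eq_bigr => j _; rewrite mxE.
Qed.

Definition Lm : 'M[C]_n.+1 := \matrix_(i, l) (((i == l) + (i == l.+1 :> nat))%N%:R).

Lemma detLm : \det Lm = 1.
Proof.
rewrite det_trig.
  by apply: big1 => i _; rewrite mxE eqxx /= (_ : (i == i.+1 :> nat) = false) ?add0n //;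
     apply/negbTE; rewrite neq_ltn ltnSn.
apply/is_trig_mxP => i j lt_ij; rewrite mxE.
rewrite (_ : (i == j) = false); last by apply/negbTE; rewrite neq_ltn lt_ij.
rewrite (_ : (i == j.+1 :> nat) = false) //; apply/negbTE; rewrite neq_ltn.
by rewrite ltnS ltnW.
Qed.

Lemma detAm_y : \det (Am y) = \det Vm * \prod_j y j.
Proof.
have -> : Am y = Lm *m (Vm *m diag_mx (\row_j y j)).
  apply/matrixP => i j; rewrite !mxE.
  rewrite (eq_bigr (fun l : 'I_n.+1 => ((i == l) + (i == l.+1 :> nat))%N%:R * (y j ^+ l * y j)));
    last by move=> l _; rewrite mul_mx_diag !mxE.
  under eq_bigr do rewrite natrD mulrDl.
  rewrite big_split /= (bigD1 i) //= eqxx mul1r big1 ?addr0; last first.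
    by move=> l /negbTE; rewrite eq_sym => ->; rewrite mul0r.
  case: (unliftP ord0 i) => [i'|] ->.
    rewrite (bigD1 (widen_ord (leqnSn n) i')) //=.
    have eb : bump 0 i' = i'.+1 by [].
    rewrite eb eqxx mul1r.
    rewrite big1 ?addr0; last first.
      move=> l nl; rewrite (_ : (i'.+1 == l.+1) = false) ?mul0r //.
      by apply/negbTE; rewrite eqSS; apply: contra nl => /eqP e2; apply/eqP/val_inj.
    by rewrite mulrDr mulr1 addrC exprSr.
  rewrite eqxx big1 ?addr0 ?expr0 ?mul1r //.
  by move=> l _; rewrite /= mul0r.
by rewrite det_mulmx detLm mul1r det_mulmx det_diag; congr (_ * _); apply: eq_bigr => j _; rewrite mxE.
Qed.

End S.
Arguments Am {C n}.
Arguments Vm {C n}.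
Arguments detAm_add {C n}.
Arguments detAm_b {C n}.
Arguments detAm_y {C n}.

Lemma detM0 (C : fieldType) n (x : 'I_n.+1 -> C) (hx : forall j, 1 - x j != 0) :
  \det (\matrix_(i, j) (if i == ord0 then 1 - x j else (x j / (1 - x j)) ^+ i))
  = (1 - \prod_j x j) * \det (Vm (fun j => x j / (1 - x j))).
Proof.
set y := fun j => x j / (1 - x j).
set M := \matrix_(i, j) _.
have b0 : forall j, 1 + y j != 0.
  move=> j; have -> : 1 + y j = (1 - x j)^-1 by rewrite /y; field; apply: hx.
  by rewrite invr_eq0.
have yb : forall j, y j = x j * (1 + y j) by move=> j; rewrite /y; field; apply: hx.
have hMA : M *m diag_mx (\row_j (1 + y j)) = Am y (fun _ => 1).
  apply/matrixP => i j; rewrite mul_mx_diag !mxE.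
  by case: eqP => // _; rewrite /y; field; apply: hx.
have e1 := detAm_add y (fun _ => 1) y.
rewrite detAm_b detAm_y -hMA det_mulmx det_diag in e1.
have P0 : \prod_j (1 + y j) != 0 by rewrite prodf_seq_neq0; apply/allP => j _; apply: b0.
have ey : \prod_j y j = \prod_j x j * \prod_j (1 + y j).
  by rewrite -big_split /=; apply: eq_bigr => j _; apply: yb.
apply: (mulIf P0).
rewrite [X in _ * X + _](eq_bigr (fun j => 1 + y j)) in e1; last by move=> j _; rewrite mxE.
rewrite ey in e1.
have : \det M * \prod_j (1 + y j) = \det (Vm y) * \prod_j (1 + y j) - \det (Vm y) * (\prod_j x j * \prod_j (1 + y j)).
  by rewrite e1; ring.
by move=> ->; ring.
Qed.

Lemma sum_perm_recl (R : nmodType) n (F : 'S_n.+1 -> R) :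
  \sum_(s : 'S_n.+1) F s = \sum_(j : 'I_n.+1) \sum_(t : 'S_n) F (lift_perm ord0 j t).
Proof.
rewrite (partition_big (fun s : 'S_n.+1 => s ord0) predT) //=.
apply: eq_bigr => j0 _.
rewrite (reindex (lift_perm ord0 j0)); last first.
  pose ulsf i (s : 'S_n.+1) k := odflt k (unlift (s i) (s (lift i k))).
  have ulsfK i (s : 'S_n.+1) k: lift (s i) (ulsf i s k) = s (lift i k).
    rewrite /ulsf; have:= neq_lift i k.
    by rewrite -(can_eq (permK s)) => /unlift_some[] ? ? ->.
  have inj_ulsf: injective (ulsf ord0 _).
    move=> s; apply: can_inj (ulsf (s ord0) s^-1%g) _ => k'.
    by rewrite {1}/ulsf ulsfK !permK liftK.
  exists (fun s => perm (inj_ulsf s)) => [s _ | s].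
    by apply/permP=> k'; rewrite permE /ulsf lift_perm_lift lift_perm_id liftK.
  move/(s _ =P _) => si0; apply/permP=> k.
  case: (unliftP ord0 k) => [k'|] ->; rewrite ?lift_perm_id //.
  by rewrite lift_perm_lift -si0 permE ulsfK.
by apply: eq_bigl => s; rewrite lift_perm_id eqxx.
Qed.

Lemma det_row0 (C : fieldType) n (y g : 'I_n.+1 -> C) :
  \det (\matrix_(i, j) (if i == ord0 then g j else y j ^+ i)) =
  \sum_(r < n.+1) (-1) ^+ r * g r * (\prod_(i < n) y (lift r i))
      * \det (Vandermonde n (\row_i y (lift r i))).
Proof.
rewrite (expand_det_row _ ord0); apply: eq_bigr => r _.
rewrite /cofactor !mxE eqxx add0n.
have -> : row' ord0 (col' r (\matrix_(i, j) (if i == ord0 then g j else y j ^+ i)))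
   = Vandermonde n (\row_i y (lift r i)) *m diag_mx (\row_i y (lift r i)).
  apply/matrixP => i j; rewrite mul_mx_diag !mxE /= -exprSr.
  by [].
rewrite det_mulmx det_diag.
rewrite (eq_bigr (fun i => y (lift r i))); last by move=> i _; rewrite mxE.
rewrite /=; ring.
Qed.

Section Gen.
Variable C : numClosedFieldType.

Definition yv {n} (x : 'I_n -> C) j := x j / (1 - x j).
Definition wgt {n} (x : 'I_n -> C) (k i : nat) j :=
  yv x j ^+ i * (if (k <= i)%N then 1 - x j else 1).
Definition Den {n} (x : 'I_n -> C) k (s : 'S_n) :=
  \prod_(i < n | (k <= i)%N) (1 - \prod_(l < n | (i <= l)%N) x (s l)).

Lemma sign_lift n r (t : 'S_n) :
  (-1) ^+ (lift_perm ord0 r t) = (-1) ^+ r * (-1) ^+ t :> C.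
Proof. by rewrite odd_lift_perm /= signr_addb signr_odd. Qed.

Lemma wgt_lift n (x : 'I_n.+1 -> C) k r (t : 'S_n) :
  \prod_(i < n.+1) wgt x k i (lift_perm ord0 r t i) =
  wgt x k 0 r * (\prod_(i < n) yv x (lift r i)) *
  \prod_(i < n) wgt (fun j => x (lift r j)) k.-1 i (t i).
Proof.
rewrite big_ord_recl lift_perm_id -mulrA; congr (_ * _).
rewrite [\prod_(i < n) yv x (lift r i)](reindex_inj (@perm_inj _ t)) /= -big_split /=.
apply: eq_bigr => i _; rewrite lift_perm_lift /wgt /=.
have -> : (k <= bump 0 i)%N = (k.-1 <= i)%N by case: k.
by rewrite exprS /yv mulrA.
Qed.

Lemma den_lift n (x : 'I_n.+1 -> C) k r (t : 'S_n) :
  Den x k (lift_perm ord0 r t) =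
  (if k == 0%N then 1 - \prod_j x j else 1) * Den (fun j => x (lift r j)) k.-1 t.
Proof.
rewrite /Den big_mkcond big_ord_recl /=.
congr (_ * _).
  case: k => [|k] //=.
  congr (_ - _); rewrite [RHS](reindex_inj (@perm_inj _ (lift_perm ord0 r t))) /=.
  by apply: eq_bigl.
rewrite [RHS]big_mkcond; apply: eq_bigr => i _ /=.
have -> : (k <= bump 0 i)%N = (k.-1 <= i)%N by case: k.
case: ifP => // _; congr (_ - _).
rewrite big_mkcond big_ord_recl /= mul1r [RHS]big_mkcond; apply: eq_bigr => l _.
by rewrite lift_perm_lift.
Qed.

Lemma gen n : forall (x : 'I_n -> C) k, (forall i, `|x i| < 1) ->
  \sum_(s : 'S_n) (-1) ^+ s * (\prod_(i < n) wgt x k i (s i)) / Den x k s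
  = \det (Vandermonde n (\row_j yv x j)).
Proof.
elim: n => [|n IH] x k hx.
  rewrite det_mx00 (big_pred1 1%g); last by move=> s; apply/esym/eqP/permP => -[].
  by rewrite odd_perm1 /Den !big_ord0 expr0 mul1r invr1 mulr1.
have hx1 : forall j, 1 - x j != 0.
  move=> j; rewrite subr_eq0; apply/eqP => e; have := hx j.
  by rewrite -e normr1 ltxx.
have hX : 1 - \prod_j x j != 0.
  rewrite subr_eq0; apply/eqP => e.
  have : `|\prod_j x j| < 1.
    rewrite normr_prod big_ord_recl; apply: (le_lt_trans _ (hx ord0)).
    apply: ler_piMr => //; apply: prodr_ile1 => i _.
    by rewrite normr_ge0 ltW.
  by rewrite -e normr1 ltxx.
pose c := if k == 0%N then 1 - \prod_j x j else 1.
rewrite sum_perm_recl.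
transitivity (\sum_(r < n.+1) ((-1) ^+ r * wgt x k 0 r * (\prod_(i < n) yv x (lift r i)) / c)
   * \det (Vandermonde n (\row_j yv (fun j => x (lift r j)) j))).
  apply: eq_bigr => r _.
  rewrite -(IH (fun j => x (lift r j)) k.-1); last by move=> i; apply: hx.
  rewrite big_distrr; apply: eq_bigr => t _ /=.
  rewrite sign_lift wgt_lift den_lift -/c invfM; clearbody c.
  move: (\prod_(i < n) wgt _ _ _ _) (Den _ _ _) => P D.
  move: ((-1) ^+ r) ((-1) ^+ t) (wgt x k 0 r) (\prod_(i < n) yv x (lift r i)) => a b w Y.
  ring.
under eq_bigr do rewrite mulrAC.
rewrite -big_distrl /= -(@det_row0 _ n (yv x) (wgt x k 0)).
rewrite /c; clear c; case: k => [|k] /=.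
  rewrite (_ : \matrix_(i, j) _ = \matrix_(i, j) (if i == ord0 then 1 - x j else (x j / (1 - x j)) ^+ i)); last first.
    by apply/matrixP => i j; rewrite !mxE /wgt expr0 mul1r.
  by rewrite detM0 // mulrC mulKf.
rewrite divr1; congr (\det _); apply/matrixP => i j; rewrite !mxE /wgt expr0 mul1r.
by case: eqP => // ->.
Qed.

End Gen.
Arguments yv {C n}.
Arguments wgt {C n}.
Arguments Den {C n}.

Theorem lemma3p1 (C : numClosedFieldType) (N k : nat) (xi : 'I_N -> C)
  (hN : (2 <= N)%N) (hk : (k <= N)%N) (hxi : forall i, `|xi i| < 1) :
  \sum_(s : 'S_N)
     ((-1) ^+ odd_perm s
      * (\prod_(i < N | (i < k)%N) ((1 - xi i) / (1 - xi (s i))) ^+ i)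
      * (\prod_(i < N | (k <= i)%N) ((1 - xi i) / (1 - xi (s i))) ^ (i%:Z - 1))
      * ((\prod_(i < N) xi (s i) ^+ i)
         / \prod_(i < N | (k <= i)%N) (1 - \prod_(l < N | (i <= l)%N) xi (s l))))
  = (\prod_(i < N | (i < k)%N) (1 - xi i))
    * (\prod_(i < N) \prod_(j < N | (i < j)%N) ((xi j - xi i) / (1 - xi i)))
    * (\prod_(i < N) (1 - xi i)^-1).
Proof.
have ha : forall j, 1 - xi j != 0.
  move=> j; rewrite subr_eq0; apply/eqP => e; have := hxi j.
  by rewrite -e normr1 ltxx.
set K := \prod_(i < N) (if (i < k)%N then (1 - xi i) ^+ i else (1 - xi i) ^ (i%:Z - 1)).
transitivity (K * \sum_(s : 'S_N) (-1) ^+ s * (\prod_(i < N) wgt xi k i (s i)) / Den xi k s).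
  rewrite big_distrr; apply: eq_bigr => s _ /=.
  have e : (\prod_(i < N | (i < k)%N) ((1 - xi i) / (1 - xi (s i))) ^+ i)
         * (\prod_(i < N | (k <= i)%N) ((1 - xi i) / (1 - xi (s i))) ^ (i%:Z - 1))
         * (\prod_(i < N) xi (s i) ^+ i) = K * \prod_(i < N) wgt xi k i (s i).
    rewrite /K big_mkcond [X in _ * X * _ = _]big_mkcond -!big_split /=.
    by apply: eq_bigr => i _; apply: per_i.
  rewrite -/(Den xi k s).
  move: e; move: (\prod_(i < N | (i < k)%N) _) (\prod_(i < N | (k <= i)%N) _ ^ _)
     (\prod_(i < N) xi (s i) ^+ i) (\prod_(i < N) wgt xi k i (s i)) (Den xi k s) K ((-1) ^+ s)
     => P1 P2 P3 W D K' sg e.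
  transitivity (sg * (P1 * P2 * P3) / D); first by ring.
  by rewrite e; ring.
rewrite (@gen C N xi k hxi) det_Vandermonde.
rewrite (eq_bigr (fun i : 'I_N => \prod_(j < N | (i < j)%N) (yv xi j - yv xi i))); last first.
  by move=> i _; apply: eq_bigr => j _; rewrite !mxE.
exact: fin_id.
Qed.
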